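(* Let $s\ge 2$ and $t\ge 0$ be integers, and let $S=\{1+j(2t+4),\ 2t+3+j(2t+4) : 0\le j\le 2^{s-2}-1\}$, i.e. $S=\{1,\,2t+3,\,2t+5,\,4t+7,\dots,\,1+(2^{s-2}-1)(2t+4),\,2t+3+(2^{s-2}-1)(2t+4)\}$. Then $\chi_{la}(C_{2^s(t+2)}(S))=3$, where $C_{2^s(t+2)}(S)$ is the circulant graph with connection set $S$.
   Context: For an integer $n\ge 3$ and a set $S$ of integers, the circulant graph $C_n(S)$ has vertex set $\mathbb Z_n$, with distinct $u,v$ adjacent iff $u-v\equiv \pm a\pmod n$ for some $a\in S$. For a connected graph $G=(V,E)$ with $q=|E|$, a local antimagic labeling is a bijection $f:E\to\{1,\dots,q\}$ such that adjacent vertices $x,y$ satisfy $f^+(x)\ne f^+(y)$, where $f^+(x)=\sum f(e)$ over edges $e$ incident to $x$; $\chi_{la}(G)$ is the minimum number of distinct values of $f^+$ over all local antimagic labelings of $G$. *)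

(* Defs.v *)
From mathcomp Require Import all_boot.
Set Implicit Arguments. Unset Strict Implicit. Unset Printing Implicit Defensive.

Definition circ_adj (n : nat) (S : seq nat) (u v : 'I_n) : bool :=
  (u != v) &&
  has (fun a => ((u + n - v) %% n == a %% n) || ((v + n - u) %% n == a %% n)) S.

Definition circ_edges (n : nat) (S : seq nat) : {set {set 'I_n}} :=
  [set e : {set 'I_n} | [exists u : 'I_n, exists v : 'I_n,
     circ_adj S u v && (e == [set u; v])]].

Definition vsum (n : nat) (S : seq nat) (f : {set 'I_n} -> nat) (x : 'I_n) : nat :=
  \sum_(e in circ_edges n S | x \in e) f e.

Definition local_antimagic (n : nat) (S : seq nat) (f : {set 'I_n} -> nat) : Prop :=
  perm_eq [seq f e | e <- enum (circ_edges n S)] (iota 1 #|circ_edges n S|) /\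
  (forall x y : 'I_n, circ_adj S x y -> vsum S f x != vsum S f y).

Definition num_vsums (n : nat) (S : seq nat) (f : {set 'I_n} -> nat) : nat :=
  size (undup [seq vsum S f x | x <- enum 'I_n]).

Definition chi_la_is (n : nat) (S : seq nat) (k : nat) : Prop :=
  (exists f : {set 'I_n} -> nat, local_antimagic S f /\ num_vsums S f = k) /\
  (forall f : {set 'I_n} -> nat, local_antimagic S f -> k <= num_vsums S f).

Definition conn_set (s t : nat) : seq nat :=
  flatten [seq [:: 1 + j * (2 * t + 4); 2 * t + 3 + j * (2 * t + 4)]
          | j <- iota 0 (2 ^ (s - 2))].

(* Main.v *)
Require Import Defs.
From mathcomp Require Import all_boot zify.
Set Implicit Arguments. Unset Strict Implicit.

Definition nxt (m : nat) (u v : nat) : bool := v %% m == (u %% m).+1 %% m.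

Lemma succm m i : i < m -> i.+1 %% m = if i.+1 < m then i.+1 else 0.
Proof.
move=> im; case: ifP => h; first by rewrite modn_small.
have -> : i.+1 = m by lia.
by rewrite modnn.
Qed.

Lemma mod2 m x j i : x < m -> j < m -> (x + j) %% m = i -> x + j = i \/ x + j = i + m.
Proof.
move=> xm jm; case: (ltnP (x + j) m) => h.
  by rewrite modn_small // => ->; left.
have e : x + j = (x + j - m) + m by lia.
rewrite e modnDr modn_small; last lia.
move=> <-; right; lia.
Qed.

Lemma resid m n u v : 0 < m -> m %| n -> v < n ->
  ((u + n - v) %% m + v %% m) %% m = u %% m.
Proof.
move=> m0 mn vn; rewrite modnDm subnK; last lia.
case/dvdnP: mn => q ->; by rewrite addnC modnMDl.
Qed.

Lemma mem_conn s t a : a \in conn_set s t <->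
  exists j, j < 2 ^ (s - 2) /\ (a = 1 + j * (2 * t + 4) \/ a = 2 * t + 3 + j * (2 * t + 4)).
Proof.
split.
  case/flatten_mapP => j; rewrite mem_iota add0n => jl.
  rewrite !inE => /orP [] /eqP ->; exists j; split => //; [left|right]; done.
case=> j [jl ha]; apply/flatten_mapP; exists j; first by rewrite mem_iota.
by rewrite !inE; case: ha => ->; rewrite eqxx ?orbT.
Qed.

Definition memS (S : seq nat) h m := forall a, a \in S <->
  exists j, j < h /\ (a = 1 + j * m \/ a = m - 1 + j * m).

Lemma nxt_res m u v : 2 < m -> forall X, X < m -> (X + v %% m) %% m = u %% m ->
  (X = 1 -> nxt m v u) /\ (X = m - 1 -> nxt m u v).
Proof.
move=> m2 X Xm; move/mod2 => /(_ Xm (ltn_pmod _ _)).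
have m0 : 0 < m by lia.
move: (ltn_pmod u m0) (ltn_pmod v m0).
rewrite /nxt !succm ?ltn_pmod //.
set i := u %% m; set j := v %% m => ilt jlt H.
split=> EX; subst X; case: ifP => c; apply/eqP; lia.
Qed.

Lemma adj_to m n h S (u v : nat) a : 2 < m -> n = 2 * h * m -> memS S h m ->
  u < n -> v < n -> a \in S -> (u + n - v) %% n = a %% n -> nxt m u v || nxt m v u.
Proof.
move=> m2 hn hS un vn /hS [j [jh ha]] e.
have m0 : 0 < m by lia.
have an : a < n by rewrite hn; nia.
rewrite (modn_small an) in e.
have mn : m %| n by rewrite hn dvdn_mull.
have := resid u m0 mn vn.
have aX : (u + n - v) %% m = a %% m by rewrite -(modn_dvdm _ mn) e.
rewrite aX.
have := nxt_res m2 (ltn_pmod a m0) (u:=u) (v:=v).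
case: ha => ->.
- rewrite [_ + j * m]addnC modnMDl (@modn_small 1); last lia.
  by move=> H /H [/(_ erefl) ->]; rewrite orbT.
- rewrite [_ + j * m]addnC modnMDl (@modn_small (m-1)); last lia.
  by move=> H /H [_ /(_ erefl) ->].
Qed.

Lemma circ_adj_sym n S (u v : 'I_n) : circ_adj S u v = circ_adj S v u.
Proof.
rewrite /circ_adj eq_sym; congr (_ && _); apply: eq_has => a /=; exact: orbC.
Qed.

Lemma nxt_irr m u : 1 < m -> nxt m u u = false.
Proof.
move=> m1; rewrite /nxt succm; last by rewrite ltn_pmod //; lia.
have := ltn_pmod u (ltnW m1); case: ifP => c ?; apply/negbTE/eqP; lia.
Qed.

Lemma adj_from m n h S (u v : 'I_n) : 2 < m -> n = 2 * h * m -> memS S h m ->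
  nxt m v u -> circ_adj S u v.
Proof.
move=> m2 hn hS nvu.
have m0 : 0 < m by lia.
rewrite /circ_adj; apply/andP; split.
  apply/negP => /eqP uv; subst v; by rewrite nxt_irr in nvu; lia.
have mn : m %| n by rewrite hn dvdn_mull.
have un := ltn_ord u; have vn := ltn_ord v.
have X1 : (u + n - v) %% m = 1.
  have := resid u m0 mn vn; move/mod2 => /(_ (ltn_pmod _ m0) (ltn_pmod _ m0)).
  move: nvu (ltn_pmod u m0) (ltn_pmod v m0) (ltn_pmod (u + n - v) m0).
  rewrite /nxt succm ?ltn_pmod //.
  case: ifP => c /eqP -> ? ? ? ?; lia.
set d := (u + n - v) %% n.
have dm : d %% m = 1 by rewrite /d (modn_dvdm _ mn).
have dn : d < n by rewrite /d; apply: ltn_pmod; clear -un; lia.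
have dq : d = d %/ m * m + 1 by rewrite {1}(divn_eq d m) dm.
set q := d %/ m in dq.
case: (ltnP q h) => qh.
  apply/hasP; exists d.
    by apply/hS; exists q; split => //; left; rewrite dq addnC.
  by rewrite /d (modn_small dn) eqxx.
set d' := (v + n - u) %% n.
have dn' : d' < n by rewrite /d'; apply: ltn_pmod; clear -un; lia.
have dd : d + d' = n.
  have : (d + d') %% n = 0.
    rewrite /d /d' modnDm.
    have -> : u + n - v + (v + n - u) = 2 * n by clear -un vn; lia.
    by rewrite modnMl.
  move/eqP; rewrite -/(dvdn n (d + d')) => /dvdnP [c ec].
  have d0 : 0 < d by rewrite dq addn1.
  move: ec; clear -d0 dn dn'; case: c => [|[|c]]; rewrite ?mulSn ?mul0n ?mul1n; lia.
have q2 : q < 2 * h.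
  by rewrite -(ltn_pmul2r m0) -hn; clear -dq dn; lia.
have en : n = q * m + m + (2 * h - 1 - q) * m.
  have e2 : 2 * h = q + 1 + (2 * h - 1 - q) by clear -q2; lia.
  by rewrite hn {1}e2 !mulnDl mul1n.
apply/hasP; exists d'.
  apply/hS; exists (2 * h - 1 - q); split; first by clear -q2 qh; lia.
  right; move: en dd dq m0; clear; move: (q * m) ((2 * h - 1 - q) * m) => A B; lia.
by rewrite /d' (modn_small dn') eqxx orbT.
Qed.

Lemma adjE m n h S (u v : 'I_n) : 2 < m -> n = 2 * h * m -> memS S h m ->
  circ_adj S u v = nxt m u v || nxt m v u.
Proof.
move=> m2 hn hS; apply/idP/idP.
  case/andP => _ /hasP [a aS /orP [] /eqP e].
    exact: (adj_to m2 hn hS (ltn_ord u) (ltn_ord v) aS e).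
  by rewrite orbC; exact: (adj_to m2 hn hS (ltn_ord v) (ltn_ord u) aS e).
case/orP => H; last exact: (adj_from m2 hn hS H).
by rewrite circ_adj_sym; exact: (adj_from m2 hn hS H).
Qed.

Lemma sum_class m k c (F : nat -> nat) : c < m ->
  \sum_(0 <= w < k * m | w %% m == c) F (w %/ m) = \sum_(0 <= b < k) F b.
Proof.
move=> cm; have m0 : 0 < m by lia.
elim: k => [|k IH]; first by rewrite mul0n !big_geq.
rewrite mulSnr (big_cat_nat _ (leq_addr _ _)) //= IH big_nat_recr //=; congr (_ + _).
rewrite -{1}(add0n (k * m)) big_addn addKn.
rewrite big_nat_cond (eq_bigl (fun i => (0 <= i < m) && (i == c))); last first.
  move=> i /=; case im: (i < m); rewrite ?andbF ?andbT //=.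
  by rewrite addnC modnMDl modn_small.
rewrite -big_nat_cond.
rewrite big_nat1_eq /= cm addnC divnMDl // divn_small //.
by rewrite addn0.
Qed.

Definition phi n (p : 'I_n * 'I_n) : {set 'I_n} := [set p.1; p.2].
Definition Pset m n : {set 'I_n * 'I_n} := [set p : 'I_n * 'I_n | nxt m p.1 p.2].

Lemma nxt_asym m u v : 2 < m -> nxt m u v -> nxt m v u -> False.
Proof.
move=> m2; have m0 : 0 < m by lia.
rewrite /nxt !succm ?ltn_pmod //.
have := ltn_pmod u m0; have := ltn_pmod v m0.
by case: ifP => c1; case: ifP => c2 ? ? /eqP e1 /eqP e2; lia.
Qed.

Lemma phi_inj m n : 2 < m -> {in Pset m n &, injective (@phi n)}.
Proof.
move=> m2 [a b] [a' b']; rewrite !inE /= => nab nab' e.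
have ha : a \in phi (a', b') by rewrite -e !inE eqxx.
have hb : b \in phi (a', b') by rewrite -e !inE eqxx orbT.
rewrite !inE in ha hb.
case/orP: ha => /eqP ea; case/orP: hb => /eqP eb; subst.
- by rewrite nxt_irr in nab; lia.
- done.
- by case: (nxt_asym m2 nab nab').
- by rewrite nxt_irr in nab; lia.
Qed.

Lemma edgesE m n S : 2 < m ->
  (forall u v : 'I_n, circ_adj S u v = nxt m u v || nxt m v u) ->
  circ_edges n S = [set phi p | p in Pset m n].
Proof.
move=> m2 adjP; apply/setP => e; rewrite inE; apply/idP/idP.
  case/existsP => u /existsP [v /andP [] ]; rewrite adjP => /orP [] H /eqP ->.
    by apply/imsetP; exists (u, v); rewrite ?inE.
  by apply/imsetP; exists (v, u); rewrite ?inE //= /phi setUC.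
case/imsetP => [[u v]]; rewrite inE /= => H ->.
by apply/existsP; exists u; apply/existsP; exists v; rewrite adjP H eqxx.
Qed.

Lemma sum_at m n S (g : {set 'I_n} -> nat) (x : 'I_n) : 2 < m ->
  (forall u v : 'I_n, circ_adj S u v = nxt m u v || nxt m v u) ->
  \sum_(e in circ_edges n S | x \in e) g e =
  \sum_(w : 'I_n | nxt m x w) g (phi (x, w)) + \sum_(u : 'I_n | nxt m u x) g (phi (u, x)).
Proof.
move=> m2 adjP; rewrite (edgesE m2 adjP) big_imset_cond; last exact: phi_inj.
rewrite (bigID (fun p : 'I_n * 'I_n => p.1 == x)) /=.
congr (_ + _).
  transitivity (\sum_(a : 'I_n | a == x) \sum_(w : 'I_n | nxt m a w) g (phi (a, w)));
    last by rewrite big_pred1_eq.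
  rewrite pair_big_dep; apply: eq_big => [[a b]|[a b]] //=.
  rewrite !inE /=; case: (eqVneq a x) => [->|]; rewrite ?eqxx ?andbT ?andbF //.
transitivity (\sum_(a : 'I_n) \sum_(w : 'I_n | (w == x) && nxt m a w) g (phi (a, w))).
  rewrite pair_big_dep; apply: eq_big => [[a b]|[a b]] //=.
  rewrite !inE /=.
  case: (eqVneq a x) => [->|ne]; rewrite ?eqxx /=.
    rewrite andbF; case: eqP => [->|]; rewrite ?nxt_irr ?andbF //; lia.
  by rewrite andbT eq_sym andbC.
rewrite [RHS]big_mkcond; apply: eq_bigr => a _.
by rewrite big_mkcondr big_pred1_eq.
Qed.

Lemma sum_cls m n k c (F : nat -> nat) : c < m -> n = k * m ->
  \sum_(w < n | w %% m == c) F (w %/ m) = \sum_(0 <= b < k) F b.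
Proof.
move=> cm hn.
by rewrite -(big_mkord (fun w => w %% m == c) (fun w => F (w %/ m))) hn sum_class.
Qed.

Definition prev m c := if c == 0 then m.-1 else c.-1.

Lemma prev_lt m c : 0 < m -> c < m -> prev m c < m.
Proof. by rewrite /prev; case: ifP => _; lia. Qed.

Lemma nxt_prev m u x : 0 < m -> nxt m u x = (u %% m == prev m (x %% m)).
Proof.
move=> m0; have ui := ltn_pmod u m0; have xi := ltn_pmod x m0.
rewrite /nxt succm // /prev.
case: ifP => c1; case: ifP => c2; apply/eqP/eqP; move: c1 c2 ui xi m0; clear; lia.
Qed.

Lemma deg_out m n k (x : 'I_n) : 0 < m -> n = k * m ->
  \sum_(w < n | nxt m x w) 1 = k.
Proof.
move=> m0 hn.
rewrite /nxt (@sum_cls m n k _ (fun _ => 1) _ hn); last by rewrite ltn_pmod.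
by rewrite sum_nat_const_nat muln1 subn0.
Qed.

Lemma deg_in m n k (x : 'I_n) : 0 < m -> n = k * m ->
  \sum_(u < n | nxt m u x) 1 = k.
Proof.
move=> m0 hn.
rewrite (eq_bigl (fun u : 'I_n => u %% m == prev m (x %% m))); last first.
  by move=> u; rewrite nxt_prev.
rewrite (@sum_cls m n k _ (fun _ => 1) _ hn); last by rewrite prev_lt ?ltn_pmod.
by rewrite sum_nat_const_nat muln1 subn0.
Qed.

Lemma key m n (A : {set 'I_n}) (G : 'I_n * 'I_n -> nat) :
  (forall p : 'I_n * 'I_n, nxt m p.1 p.2 -> (p.1 \in A) = (p.2 \notin A)) ->
  \sum_(x in A) (\sum_(w < n | nxt m x w) G (x, w) + \sum_(u < n | nxt m u x) G (u, x))
  = \sum_(p : 'I_n * 'I_n | nxt m p.1 p.2) G p.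
Proof.
move=> HA; rewrite big_split /=.
rewrite (pair_big_dep (fun x : 'I_n => x \in A) (fun x w : 'I_n => nxt m x w) (fun x w : 'I_n => G (x, w))).
rewrite (exchange_big_dep predT) //=.
rewrite (pair_big_dep predT (fun u x : 'I_n => (x \in A) && nxt m u x) (fun u x : 'I_n => G (u, x))) /=.
rewrite [RHS](bigID (fun p : 'I_n * 'I_n => p.1 \in A)) /=.
congr (_ + _).
  by apply: eq_big => [[a b]|[a b]] //=; rewrite andbC.
apply: eq_big => [[a b]|[a b]] //=.
case H: (nxt m a b); rewrite ?andbF ?andbT //=.
by rewrite (HA (a, b) H) negbK.
Qed.

Lemma vsum_at m n S f (x : 'I_n) : 2 < m ->
  (forall u v : 'I_n, circ_adj S u v = nxt m u v || nxt m v u) ->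
  vsum S f x = \sum_(w < n | nxt m x w) f (phi (x, w)) + \sum_(u < n | nxt m u x) f (phi (u, x)).
Proof. by move=> m2 adjP; rewrite /vsum (sum_at _ _ m2 adjP). Qed.

Lemma lower m n k S (f : {set 'I_n} -> nat) : 2 < m -> n = k * m -> 0 < k ->
  (forall u v : 'I_n, circ_adj S u v = nxt m u v || nxt m v u) ->
  local_antimagic S f -> 3 <= num_vsums S f.
Proof.
move=> m2 hn k0 adjP [_ Hadj].
have m0 : 0 < m by lia.
have n1 : 1 < n by rewrite hn; nia.
rewrite leqNgt; apply/negP => Hlt.
pose x0 : 'I_n := Ordinal (ltnW n1).
pose x1 : 'I_n := Ordinal n1.
have a01 : circ_adj S x0 x1.
  by rewrite adjP /nxt /= mod0n eqxx.
set v0 := vsum S f x0; set v1 := vsum S f x1.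
have v01 := Hadj _ _ a01.
have inL : forall x, vsum S f x \in undup [seq vsum S f x | x <- enum 'I_n].
  by move=> x; rewrite mem_undup map_f // mem_enum.
have Hall : forall x, (vsum S f x == v0) || (vsum S f x == v1).
  move=> x; case/boolP: ((vsum S f x == v0) || (vsum S f x == v1)) => //; rewrite negb_or => /andP [h0 h1].
  have : 3 <= num_vsums S f.
    apply: (uniq_leq_size (s1 := [:: v0; v1; vsum S f x])).
      by rewrite /= !inE !negb_or v01 /= ![_ == vsum S f x]eq_sym h0 h1.
    by move=> y; rewrite !inE => /or3P [] /eqP ->; apply: inL.
  by rewrite leqNgt Hlt.
pose A := [set x | vsum S f x == v0].
have HA : forall p : 'I_n * 'I_n, nxt m p.1 p.2 -> (p.1 \in A) = (p.2 \notin A).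
  move=> [a b] /= H.
  have : vsum S f a != vsum S f b by apply: Hadj; rewrite adjP H.
  rewrite !inE; move: (Hall a) (Hall b).
  by case/orP => /eqP ->; case/orP => /eqP ->; rewrite ?eqxx // eq_sym ?(negbTE v01).
have HB : forall p : 'I_n * 'I_n, nxt m p.1 p.2 -> (p.1 \in ~: A) = (p.2 \notin ~: A).
  by move=> p H; rewrite !in_setC (HA p H) negbK.
have sA := key (fun p => f (phi p)) HA.
have sB := key (fun p => f (phi p)) HB.
have dA := key (fun _ => 1) HA.
have dB := key (fun _ => 1) HB.
rewrite -sB in sA; rewrite -dB in dA.
have e1 : forall x : 'I_n, \sum_(w < n | nxt m x w) 1 + \sum_(u < n | nxt m u x) 1 = k + k.
  by move=> x; rewrite (deg_out _ m0 hn) (deg_in _ m0 hn).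
rewrite !(eq_bigr _ (fun x _ => e1 x)) !sum_nat_const in dA.
have cAB : #|A| = #|~: A|.
  by apply/eqP; rewrite -(eqn_pmul2r (_ : 0 < k + k)) ?dA //; lia.
have vA : forall x, x \in A -> \sum_(w < n | nxt m x w) f (phi (x, w)) + \sum_(u < n | nxt m u x) f (phi (u, x)) = v0.
  by move=> x; rewrite inE -(vsum_at _ _ m2 adjP) => /eqP.
have vB : forall x, x \in ~: A -> \sum_(w < n | nxt m x w) f (phi (x, w)) + \sum_(u < n | nxt m u x) f (phi (u, x)) = v1.
  move=> x; rewrite !inE -(vsum_at _ _ m2 adjP) => h.
  by move: (Hall x); rewrite (negbTE h) => /eqP.
rewrite (eq_bigr _ vA) (eq_bigr _ vB) !sum_nat_const -cAB in sA.
have Apos : 0 < #|A| by apply/card_gt0P; exists x0; rewrite inE.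
move/eqP: sA; rewrite eqn_pmul2l // => /eqP e.
by move: v01; rewrite -/v0 -/v1 e eqxx.
Qed.

Definition pi m c := if odd c then m.-1 - c./2 else c./2.
Definition psv m c := if c == 0 then m./2 else if odd c then m.-1 else m.

Lemma half2 j (b : bool) : (j * 2 + b)./2 = j.
Proof. by rewrite muln2 addnC half_bit_double. Qed.

Lemma odd2 j (b : bool) : odd (j * 2 + b) = b.
Proof. by rewrite oddD muln2 odd_double; case: b. Qed.

Lemma decomp c : exists j (b : bool), c = j * 2 + b.
Proof. by exists c./2, (odd c); rewrite muln2 addnC odd_double_half. Qed.

Lemma pi_lt m c : c < m -> pi m c < m.
Proof.
rewrite /pi => cm; case: (decomp c) => j [b e]; rewrite e half2 odd2.
case: b e => e; lia.
Qed.

Lemma pi_inj m r c c' : m = r * 2 -> c < m -> c' < m -> pi m c = pi m c' -> c = c'.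
Proof.
move=> hm cm cm'; rewrite /pi.
case: (decomp c) => j [b e]; case: (decomp c') => j' [b' e']; subst c c'.
rewrite !half2 !odd2; case: b cm; case: b' cm'; lia.
Qed.

Lemma psum m r c : m = r * 2 -> 1 < r -> c < m ->
  pi m c + pi m (prev m c) = psv m c.
Proof.
move=> hm r1 cm; rewrite /pi /psv /prev.
case: (decomp c) => j [b e]; subst c; rewrite half2 odd2.
case: b cm => cm /=.
  have -> : (j * 2 + 1 == 0) = false by lia.
  have -> : (j * 2 + 1).-1 = j * 2 + false by rewrite addn1 addn0.
  rewrite half2 odd2 /=; lia.
rewrite addn0.
case: (posnP j) => [->|jp] /=.
  have -> : m.-1 = (r - 1) * 2 + true by lia.
  rewrite half2 odd2 hm /=; rewrite -(half2 r false) addn0; lia.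
have -> : (j * 2 == 0) = false by lia.
have -> : (j * 2).-1 = (j - 1) * 2 + true by lia.
rewrite half2 odd2 /=; lia.
Qed.

Lemma psv_neq m r c : m = r * 2 -> 1 < r -> c < m -> psv m c != psv m (c.+1 %% m).
Proof.
move=> hm r1 cm; rewrite succm // /psv.
have hr : m./2 = r by rewrite hm muln2 doubleK.
rewrite hr.
case: (decomp c) => j [b e]; subst c; rewrite odd2.
case: b cm => cm /=.
  rewrite (_ : (j * 2 + 1 == 0) = false); last lia.
  case: ltnP => h /=; rewrite ?oddD ?oddM ?andbF /=; apply/negP => /eqP; lia.
rewrite addn0; case: (posnP j) => [->|jp] /=.
  have h1 : (0 * 2).+1 < m by lia.
  rewrite h1 /=.
  apply/negP => /eqP; lia.
rewrite (_ : (j * 2 == 0) = false); last lia.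
case: ltnP => h /=; rewrite ?oddD ?oddM ?andbF /=; apply/negP => /eqP; lia.
Qed.

Definition R k c a b := if odd c then a + k * (k.-1 - b) else k * a + (k.-1 - b).

Lemma R_lt k c a b : a < k -> b < k -> R k c a b < k * k.
Proof.
move=> ak bk; rewrite /R.
have h1 : k * (k.-1 - b) <= k * k.-1 by rewrite leq_mul2l leq_subr orbT.
have h2 : k * a <= k * k.-1 by rewrite leq_mul2l; apply/orP; right; lia.
have h3 : k * k.-1 + k = k * k by rewrite -mulnSr prednK //; lia.
case: odd; lia.
Qed.

Lemma divmod_uniq d q r q' r' : r < d -> r' < d -> q * d + r = q' * d + r' -> q = q' /\ r = r'.
Proof.
move=> rd rd' e; have d0 : 0 < d by lia.
have := congr1 (divn^~ d) e; have := congr1 (modn^~ d) e.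
rewrite /= !modnMDl !divnMDl // !modn_small // !divn_small // !addn0 => -> ->.
by [].
Qed.

Lemma R_inj k c a b a' b' : a < k -> b < k -> a' < k -> b' < k ->
  R k c a b = R k c a' b' -> a = a' /\ b = b'.
Proof.
move=> ak bk ak' bk'; rewrite /R; case: odd => e.
  have [] := @divmod_uniq k (k.-1 - b) a (k.-1 - b') a' ak ak'.
    by rewrite addnC mulnC e addnC mulnC.
  move=> h1 h2; split=> //; lia.
have [] := @divmod_uniq k a (k.-1 - b) a' (k.-1 - b'); try lia.
Qed.

Lemma Rsum k c c' a : a < k -> odd c' = ~~ odd c ->
  \sum_(0 <= b < k) R k c a b + \sum_(0 <= b < k) R k c' b a = k * k * k.-1 + k * k.-1.
Proof.
move=> ak hc.
have hT : \sum_(0 <= b < k) b + \sum_(0 <= b < k) (k.-1 - b) = k * k.-1.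
  rewrite -big_split /= (eq_big_nat _ _ (F2 := fun _ => k.-1)); last first.
    by move=> i /andP [_ ik]; lia.
  by rewrite sum_nat_const_nat subn0.
set T := \sum_(0 <= b < k) b in hT; set T' := \sum_(0 <= b < k) (k.-1 - b) in hT.
have ea : a + (k.-1 - a) = k.-1 by lia.
rewrite /R hc; case: (odd c) => /=.
  rewrite !big_split /= -!big_distrr /= !sum_nat_const_nat subn0 -/T -/T'.
  have : k * a + k * (k.-1 - a) = k * k.-1 by rewrite -mulnDr ea.
  have : k * T + k * T' = k * (k * k.-1) by rewrite -mulnDr hT.
  lia.
rewrite !big_split /= -!big_distrr /= !sum_nat_const_nat subn0 -/T -/T'.
have : k * (k * a) + k * (k * (k.-1 - a)) = k * (k * k.-1) by rewrite -!mulnDr ea.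
lia.
Qed.

Definition lab m k (u w : nat) := 1 + k * k * pi m (u %% m) + R k (u %% m) (u %/ m) (w %/ m).
Definition fl m k n (e : {set 'I_n}) := \sum_(p in Pset m n | phi p == e) lab m k p.1 p.2.
Definition V k s := k + k + k * k * k * s + (k * k * k.-1 + k * k.-1).

Lemma fl_phi m k n (p : 'I_n * 'I_n) : 2 < m -> p \in Pset m n -> fl m k (phi p) = lab m k p.1 p.2.
Proof.
move=> m2 pP; rewrite /fl (big_pred1 p) // => p' /=.
case: (eqVneq p' p) => [->|ne]; first by rewrite pP eqxx.
apply/negbTE/andP => [[H' /eqP e]]; by rewrite (phi_inj m2 H' pP e) eqxx in ne.
Qed.

Lemma odd_prev m r c : m = r * 2 -> 0 < r -> c < m -> odd (prev m c) = ~~ odd c.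
Proof.
move=> hm r0 cm; rewrite /prev; case: (decomp c) => j [b e]; subst c.
case: b cm => cm /=.
  rewrite (_ : (j * 2 + 1 == 0) = false); last lia.
  rewrite (_ : (j * 2 + 1).-1 = j * 2 + false); last lia.
  by rewrite !oddD !oddM /= ?andbF.
rewrite addn0; case: (posnP j) => [->|jp] /=.
  by rewrite (_ : m.-1 = (r - 1) * 2 + 1) ?oddD ?oddM /= ?andbF //; lia.
rewrite (_ : (j * 2 == 0) = false); last lia.
rewrite (_ : (j * 2).-1 = (j - 1) * 2 + 1); last lia.
by rewrite !oddD !oddM /= ?andbF.
Qed.

Lemma vsum_fl m r k n S (x : 'I_n) : m = r * 2 -> 1 < r -> n = k * m ->
  (forall u v : 'I_n, circ_adj S u v = nxt m u v || nxt m v u) ->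
  vsum S (@fl m k n) x = V k (psv m (x %% m)).
Proof.
move=> hm r1 hn adjP.
have m2 : 2 < m by lia.
have m0 : 0 < m by lia.
rewrite (vsum_at _ _ m2 adjP).
set c := x %% m; set a := x %/ m.
have cm : c < m by rewrite ltn_pmod.
have ak : a < k by rewrite ltn_divLR // -hn.
rewrite (eq_bigr (fun w : 'I_n => lab m k x w)); last first.
  by move=> w H; rewrite fl_phi // inE.
rewrite [X in _ + X](eq_bigr (fun u : 'I_n => lab m k u x)); last first.
  by move=> u H; rewrite fl_phi // inE.
rewrite [X in _ + X](eq_bigl (fun u : 'I_n => u %% m == prev m c)); last first.
  by move=> u; rewrite nxt_prev.
rewrite [X in _ + X](eq_bigr (fun u : 'I_n => (fun b => 1 + k * k * pi m (prev m c) + R k (prev m c) b a) (u %/ m))); last first.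
  by move=> u /eqP H; rewrite /lab H.
rewrite (@sum_cls m n k _ (fun b => 1 + k * k * pi m (prev m c) + R k (prev m c) b a) _ hn); last by rewrite prev_lt.
rewrite /nxt -/c.
rewrite (@sum_cls m n k _ (fun b => 1 + k * k * pi m c + R k c a b) _ hn); last by rewrite ltn_pmod.
rewrite !big_split /= !sum_nat_const_nat subn0.
have := @Rsum k c (prev m c) a ak (odd_prev hm (ltnW r1) cm).
have := psum hm r1 cm.
rewrite /V; set s := psv m c => ps Rs.
rewrite -ps mulnDr !mulnA.
move: Rs; set X := \sum_(0 <= i < k) R k c a i; set Y := \sum_(0 <= i < k) R k (prev m c) i a.
lia.
Qed.

Lemma lab_range m k n (p : 'I_n * 'I_n) : 0 < m -> n = k * m ->
  0 < lab m k p.1 p.2 <= k * k * m.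
Proof.
move=> m0 hn; case: p => u w /=; rewrite /lab.
have uk : u %/ m < k by rewrite ltn_divLR // -hn.
have wk : w %/ m < k by rewrite ltn_divLR // -hn.
have Rl := R_lt (u %% m) uk wk.
have pl := pi_lt (ltn_pmod u m0).
have h : k * k * pi m (u %% m) + k * k <= k * k * m.
  by rewrite addnC -mulnS leq_mul2l pl orbT.
lia.
Qed.

Lemma lab_inj m r k n (p p' : 'I_n * 'I_n) : m = r * 2 -> 1 < r -> n = k * m ->
  p \in Pset m n -> p' \in Pset m n -> lab m k p.1 p.2 = lab m k p'.1 p'.2 -> p = p'.
Proof.
move=> hm r1 hn; have m0 : 0 < m by lia.
case: p => u w; case: p' => u' w'; rewrite !inE /= /nxt /lab => /eqP H /eqP H' e.
have uk : u %/ m < k by rewrite ltn_divLR // -hn.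
have wk : w %/ m < k by rewrite ltn_divLR // -hn.
have uk' : u' %/ m < k by rewrite ltn_divLR // -hn.
have wk' : w' %/ m < k by rewrite ltn_divLR // -hn.
have Rl := R_lt (u %% m) uk wk.
have Rl' := R_lt (u' %% m) uk' wk'.
have e0 : pi m (u %% m) * (k * k) + R k (u %% m) (u %/ m) (w %/ m) =
          pi m (u' %% m) * (k * k) + R k (u' %% m) (u' %/ m) (w' %/ m).
  by move: e; rewrite (mulnC (k * k)) (mulnC (k * k)); lia.
have [e1 e2] := divmod_uniq Rl Rl' e0.
have ec := pi_inj hm (ltn_pmod u m0) (ltn_pmod u' m0) e1.
rewrite -ec in e2.
have [ea eb] := R_inj uk wk uk' wk' e2.
have eu : u = u' by apply: val_inj; rewrite /= (divn_eq u m) (divn_eq u' m) ea ec.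
have ew : w = w' by apply: val_inj; rewrite /= (divn_eq w m) (divn_eq w' m) eb H H' ec.
by rewrite eu ew.
Qed.

Lemma card_P m k n : 0 < m -> n = k * m -> #|Pset m n| = k * k * m.
Proof.
move=> m0 hn.
rewrite -sum1_card (eq_bigl (fun p : 'I_n * 'I_n => predT p.1 && nxt m p.1 p.2)); last first.
  by move=> p; rewrite inE.
rewrite -(pair_big_dep predT (fun u w : 'I_n => nxt m u w) (fun _ _ => 1)) /=.
rewrite (eq_bigr (fun _ => k)); last by move=> u _; apply: deg_out.
by rewrite sum_nat_const card_ord hn; lia.
Qed.

Lemma V_inj k s s' : 0 < k -> V k s = V k s' -> s = s'.
Proof.
rewrite /V => k0 e; apply/eqP; rewrite -(eqn_pmul2l (_ : 0 < k * k * k)).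
  by apply/eqP; lia.
by rewrite !muln_gt0 k0.
Qed.


Lemma main_gen m r h n S : m = r * 2 -> 1 < r -> 0 < h -> n = 2 * h * m -> memS S h m ->
  chi_la_is n S 3.
Proof.
move=> hm r1 h0 hn hS.
have m2 : 2 < m by lia.
have m0 : 0 < m by lia.
have k0 : 0 < 2 * h by lia.
have adjP : forall u v : 'I_n, circ_adj S u v = nxt m u v || nxt m v u.
  by move=> u v; apply: adjE hn hS.
have hn' : n = (2 * h) * m by [].
set k := 2 * h in k0 hn'.
have n2 : 2 < n by rewrite hn'; nia.
have perm : perm_eq [seq @fl m k n e | e <- enum (circ_edges n S)] (iota 1 #|circ_edges n S|).
  rewrite (edgesE m2 adjP).
  set E := [set phi p | p in Pset m n].
  have cE : #|E| = k * k * m by rewrite card_in_imset; [exact: card_P | exact: (phi_inj m2)].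
  have inj : {in enum E &, injective (@fl m k n)}.
    move=> e e'; rewrite !mem_enum => /imsetP [p pP ->] /imsetP [p' pP' ->].
    by rewrite !fl_phi // => /(lab_inj hm r1 hn' pP pP') ->.
  have un : uniq [seq @fl m k n e | e <- enum E] by rewrite map_inj_in_uniq // enum_uniq.
  have sub : {subset [seq @fl m k n e | e <- enum E] <= iota 1 #|E|}.
    move=> y /mapP [e]; rewrite mem_enum => /imsetP [p pP ->] ->.
    rewrite fl_phi // mem_iota cE; have := lab_range p m0 hn'; lia.
  have sz0 : size (iota 1 #|E|) <= size [seq @fl m k n e | e <- enum E].
    by rewrite size_iota size_map -cardE.
  have [sz eqi] := uniq_min_size un sub sz0.
  by apply: uniq_perm => //; exact: iota_uniq.
have anti : forall x y : 'I_n, circ_adj S x y -> vsum S (@fl m k n) x != vsum S (@fl m k n) y.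
  move=> x y; rewrite adjP !(vsum_fl _ hm r1 hn' adjP).
  case/orP => /eqP H; apply/negP => /eqP /(V_inj k0) /eqP.
    by rewrite H; apply/negP; exact: (psv_neq hm r1 (ltn_pmod _ m0)).
  by rewrite eq_sym H; apply/negP; exact: (psv_neq hm r1 (ltn_pmod _ m0)).
have hr : m./2 = r by rewrite hm muln2 doubleK.
have num : num_vsums S (@fl m k n) = 3.
  rewrite /num_vsums.
  have pe : perm_eq (undup [seq vsum S (@fl m k n) x | x <- enum 'I_n]) [:: V k r; V k m.-1; V k m].
    apply: uniq_perm; first exact: undup_uniq.
      rewrite /= !inE !negb_or; repeat (apply/andP; split) => //; apply/negP => /eqP /(V_inj k0); lia.
    move=> y; rewrite mem_undup; apply/mapP/idP.
      case=> x _ ->; rewrite (vsum_fl _ hm r1 hn' adjP) /psv hr !inE.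
      by case: ifP => _; rewrite ?eqxx ?orbT //; case: ifP => _; rewrite ?eqxx ?orbT.
    have w0 : 0 < n by lia.
    have w1 : 1 < n by lia.
    rewrite !inE => /or3P [] /eqP ->.
    - exists (Ordinal w0); first by rewrite mem_enum.
      by rewrite (vsum_fl _ hm r1 hn' adjP) /= mod0n /psv hr.
    - exists (Ordinal w1); first by rewrite mem_enum.
      by rewrite (vsum_fl _ hm r1 hn' adjP) /= modn_small ?(ltnW m2) // /psv.
    - exists (Ordinal n2); first by rewrite mem_enum.
      by rewrite (vsum_fl _ hm r1 hn' adjP) /= modn_small // /psv.
  by rewrite (perm_size pe).
split.
  by exists (@fl m k n); split => //; split.
move=> f Hf; exact: (lower m2 hn' k0 adjP Hf).
Qed.
Unset Implicit Arguments.

Theorem mainTheorem12 (s t : nat) (hs : 2 <= s) :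
  chi_la_is (2 ^ s * (t + 2)) (conn_set s t) 3.
Proof.
apply: (@main_gen (2 * t + 4) (t + 2) (2 ^ (s - 2))).
- lia.
- lia.
- by rewrite expn_gt0.
- have e : 2 ^ s = 2 ^ (s - 2) * 4 by rewrite -{1}(subnK hs) expnD.
  rewrite e; lia.
- move=> a; rewrite mem_conn; split; case=> j [jh H]; exists j; split => //; lia.
Qed.
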